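(* Let $(\mathcal{C},\oplus,N,\gamma,\otimes,I,\gamma')$ be a bipermutative category in which $I$ is a terminal object, with unique maps $!_X : X \to I$. Then $N$ is an initial object, the unique map $N\to A$ being $N = A\otimes N \xrightarrow{A\otimes !_N} A\otimes I = A$, and $(\oplus,N)$ is a categorical coproduct, with left injection \[ A = A\oplus (B\otimes N) \xrightarrow{A\oplus (B\otimes !_N)} A\oplus (B\otimes I) = A\oplus B \] and the symmetric right injection $B \to A\oplus B$. The copairing of $f:A\to C$ and $g:B\to C$ is \[ A\oplus B \xrightarrow{f\oplus g} C\oplus C = (I\oplus I)\otimes C \xrightarrow{!_{I\oplus I}\otimes C} I\otimes C = C. \]
   Context: A symmetric monoidal category $(\mathcal{C},\otimes,I,\gamma')$ is strict when its associator and unitors are identities. A bipermutative category is a category $\mathcal{C}$ with two strict symmetric monoidal structures $(\oplus,N,\gamma)$ and $(\otimes,I,\gamma')$ such that, on the nose, $A\otimes(B\oplus C)=(A\otimes B)\oplus(A\otimes C)$ (and likewise on morphisms), $N\otimes A = N = A\otimes N$, and there is a natural isomorphism $\delta^\sharp_{A,B,C}:(A\otimes C)\oplus(B\otimes C)\to(A\oplus B)\otimes C$ (in general not an identity), all of these satisfying Laplaza's coherence conditions for rig (distributive symmetric bimonoidal) categories. The equality $C\oplus C=(I\oplus I)\otimes C$ in the claim is the identification $(I\oplus I)\otimes C \cong (I\otimes C)\oplus(I\otimes C)$ given by $\delta^\sharp$. *)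

(* Defs.v *)
(* Hom-sets carry Leibniz equality; "strict" equalities of objects are
   propositional equalities, and the corresponding equalities of morphisms
   are expressed by composing with the canonical morphism [eq_hom e]
   induced by an equality of objects [e : A = B]. *)

Set Implicit Arguments.
Unset Strict Implicit.

Record category := Category {
  ob :> Type;
  hom : ob -> ob -> Type;
  idm : forall A, hom A A;
  comp : forall A B D, hom B D -> hom A B -> hom A D;
  comp_idl : forall A B (f : hom A B), comp (idm B) f = f;
  comp_idr : forall A B (f : hom A B), comp f (idm A) = f;
  comp_assoc : forall A B D E (h : hom D E) (g : hom B D) (f : hom A B),
      comp h (comp g f) = comp (comp h g) f
}.
Arguments hom {c} _ _.
Arguments idm {c} A.
Arguments comp {c A B D} _ _.

Notation "g ∘ f" := (comp g f) (at level 55, left associativity).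

Definition eq_hom (C : category) (A B : C) (e : A = B) : hom A B :=
  match e in (_ = B') return hom A B' with eq_refl => idm A end.
Arguments eq_hom {C A B} e.

Record ssm (C : category) := SSM {
  tens : C -> C -> C;
  tensm : forall A A' B B', hom A A' -> hom B B' -> hom (tens A B) (tens A' B');
  munit : C;
  sym : forall A B, hom (tens A B) (tens B A);
  assocO : forall A B D, tens A (tens B D) = tens (tens A B) D;
  unitlO : forall A, tens munit A = A;
  unitrO : forall A, tens A munit = A;
  tens_id : forall A B, tensm (idm A) (idm B) = idm (tens A B);
  tens_comp : forall A A' A'' B B' B''
      (f : hom A A') (f' : hom A' A'') (g : hom B B') (g' : hom B' B''),
      tensm (f' ∘ f) (g' ∘ g) = tensm f' g' ∘ tensm f g;
  (* strictness on morphisms (associator and unitors are identities) *)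
  assocM : forall A A' B B' D D' (f : hom A A') (g : hom B B') (h : hom D D'),
      eq_hom (assocO A' B' D') ∘ tensm f (tensm g h)
      = tensm (tensm f g) h ∘ eq_hom (assocO A B D);
  unitlM : forall A A' (f : hom A A'),
      eq_hom (unitlO A') ∘ tensm (idm munit) f = f ∘ eq_hom (unitlO A);
  unitrM : forall A A' (f : hom A A'),
      eq_hom (unitrO A') ∘ tensm f (idm munit) = f ∘ eq_hom (unitrO A);
  sym_nat : forall A A' B B' (f : hom A A') (g : hom B B'),
      sym A' B' ∘ tensm f g = tensm g f ∘ sym A B;
  sym_inv : forall A B, sym B A ∘ sym A B = idm (tens A B);
  sym_unit : forall A, eq_hom (unitlO A) ∘ sym A munit = eq_hom (unitrO A);
  sym_hex : forall A B D,
      eq_hom (assocO B D A) ∘ tensm (idm B) (sym A D)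
      ∘ eq_hom (eq_sym (assocO B A D)) ∘ tensm (sym A B) (idm D)
      ∘ eq_hom (assocO A B D)
      = sym A (tens B D)
}.
Arguments tens {C} s _ _.
Arguments tensm {C} s {A A' B B'} _ _.
Arguments munit {C} s.
Arguments sym {C} s A B.
Arguments assocO {C} s A B D.
Arguments unitlO {C} s A.
Arguments unitrO {C} s A.

Section Bip.
Variable C : category.
Variables P T : ssm C.

Local Notation "A ⊕ B" := (tens P A B) (at level 50, left associativity).
Local Notation "A ⊗ B" := (tens T A B) (at level 40, left associativity).
Local Notation "f ⊞ g" := (tensm P f g) (at level 50, left associativity).
Local Notation "f ⊠ g" := (tensm T f g) (at level 40, left associativity).
Local Notation N := (munit P).

Definition mid_swap (X Y Z W : C) : hom ((X ⊕ Y) ⊕ (Z ⊕ W)) ((X ⊕ Z) ⊕ (Y ⊕ W)) :=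
  eq_hom (assocO P X Z (Y ⊕ W))
  ∘ (idm X ⊞ eq_hom (eq_sym (assocO P Z Y W)))
  ∘ (idm X ⊞ (sym P Y Z ⊞ idm W))
  ∘ (idm X ⊞ eq_hom (assocO P Y Z W))
  ∘ eq_hom (eq_sym (assocO P X Y (Z ⊕ W))).

(** Laplaza's axioms for a rig category, specialised to the case where
    ⊕ and ⊗ are strict, left distributivity δ is an identity, and the
    annihilators λ*, ρ* are identities.  [dr A B D] is the natural iso
    δ#_{A,B,D} : (A⊗D)⊕(B⊗D) -> (A⊕B)⊗D of the paper; [dr_inv] is its
    inverse (Laplaza's orientation).  Laplaza's axioms not listed below
    (III, V, IX-XII, XIV, XV, XVIII, XX-XXIV) only involve identities
    in the strict setting and hold automatically. *)
Record bip_axioms := BipAxioms {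
  distlO : forall A B D, A ⊗ (B ⊕ D) = (A ⊗ B) ⊕ (A ⊗ D);
  distlM : forall A A' B B' D D' (f : hom A A') (g : hom B B') (h : hom D D'),
      eq_hom (distlO A' B' D') ∘ (f ⊠ (g ⊞ h))
      = ((f ⊠ g) ⊞ (f ⊠ h)) ∘ eq_hom (distlO A B D);
  zerolO : forall A, N ⊗ A = N;
  zerorO : forall A, A ⊗ N = N;
  zerolM : forall A A' (f : hom A A'),
      eq_hom (zerolO A') ∘ (idm N ⊠ f) = eq_hom (zerolO A);
  zerorM : forall A A' (f : hom A A'),
      eq_hom (zerorO A') ∘ (f ⊠ idm N) = eq_hom (zerorO A);
  dr : forall A B D, hom ((A ⊗ D) ⊕ (B ⊗ D)) ((A ⊕ B) ⊗ D);
  dr_inv : forall A B D, hom ((A ⊕ B) ⊗ D) ((A ⊗ D) ⊕ (B ⊗ D));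
  dr_iso1 : forall A B D, dr_inv A B D ∘ dr A B D = idm _;
  dr_iso2 : forall A B D, dr A B D ∘ dr_inv A B D = idm _;
  dr_nat : forall A A' B B' D D' (f : hom A A') (g : hom B B') (h : hom D D'),
      dr A' B' D' ∘ ((f ⊠ h) ⊞ (g ⊠ h)) = ((f ⊞ g) ⊠ h) ∘ dr A B D;
  lap_I : forall A B D,
      eq_hom (distlO A D B) ∘ (idm A ⊠ sym P B D)
      = sym P (A ⊗ B) (A ⊗ D) ∘ eq_hom (distlO A B D);
  lap_II : forall A B D,
      dr_inv A B D
      = ((sym T D A ⊞ sym T D B) ∘ eq_hom (distlO D A B)) ∘ sym T (A ⊕ B) D;
  lap_IV : forall A B D E,
      (dr_inv A B E ⊞ idm (D ⊗ E)) ∘ dr_inv (A ⊕ B) D E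
        ∘ (eq_hom (assocO P A B D) ⊠ idm E)
      = eq_hom (assocO P (A ⊗ E) (B ⊗ E) (D ⊗ E))
        ∘ (idm (A ⊗ E) ⊞ dr_inv B D E) ∘ dr_inv A (B ⊕ D) E;
  lap_VI : forall A B D E,
      dr_inv (A ⊗ D) (B ⊗ D) E ∘ (dr_inv A B D ⊠ idm E)
        ∘ eq_hom (assocO T (A ⊕ B) D E)
      = (eq_hom (assocO T A D E) ⊞ eq_hom (assocO T B D E)) ∘ dr_inv A B (D ⊗ E);
  lap_VII : forall A B D E,
      (eq_hom (assocO T A B E) ⊞ eq_hom (assocO T A D E))
        ∘ eq_hom (distlO A (B ⊗ E) (D ⊗ E)) ∘ (idm A ⊠ dr_inv B D E)
      = dr_inv (A ⊗ B) (A ⊗ D) E ∘ (eq_hom (distlO A B D) ⊠ idm E)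
        ∘ eq_hom (assocO T A (B ⊕ D) E);
  lap_VIII : forall A B D E,
      (dr_inv A B D ⊞ dr_inv A B E) ∘ eq_hom (distlO (A ⊕ B) D E)
      = mid_swap (A ⊗ D) (A ⊗ E) (B ⊗ D) (B ⊗ E)
        ∘ (eq_hom (distlO A D E) ⊞ eq_hom (distlO B D E)) ∘ dr_inv A B (D ⊕ E);
  lap_XIII : forall A, eq_hom (zerorO A) ∘ sym T N A = eq_hom (zerolO A);
  lap_XVI : forall A B,
      eq_hom (unitlO P (A ⊗ B)) ∘ (eq_hom (zerolO B) ⊞ idm (A ⊗ B)) ∘ dr_inv N A B
      = eq_hom (unitlO P A) ⊠ idm B;
  lap_XVII : forall A B,
      eq_hom (unitrO P (A ⊗ B)) ∘ (idm (A ⊗ B) ⊞ eq_hom (zerolO B)) ∘ dr_inv A N B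
      = eq_hom (unitrO P A) ⊠ idm B;
  lap_XIX : forall A B,
      eq_hom (unitlO P N) ∘ (eq_hom (zerorO A) ⊞ eq_hom (zerorO B)) ∘ dr_inv A B N
      = eq_hom (zerorO (A ⊕ B))
}.
End Bip.

Record bipermutative (C : category) := Bipermutative {
  plus : ssm C;
  times : ssm C;
  bip_ax :> bip_axioms plus times
}.

Section Maps.
Variable C : category.
Variable BP : bipermutative C.
Local Notation P := (plus BP).
Local Notation T := (times BP).
Local Notation "A ⊕ B" := (tens P A B) (at level 50, left associativity).
Local Notation "A ⊗ B" := (tens T A B) (at level 40, left associativity).
Local Notation "f ⊞ g" := (tensm P f g) (at level 50, left associativity).
Local Notation "f ⊠ g" := (tensm T f g) (at level 40, left associativity).
Local Notation N := (munit P).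
Local Notation I := (munit T).
Variable bang : forall X : C, hom X I.

Definition init_map (A : C) : hom N A :=
  eq_hom (unitrO T A) ∘ (idm A ⊠ bang N) ∘ eq_hom (eq_sym (zerorO BP A)).

Definition inl_map (A B : C) : hom A (A ⊕ B) :=
  (idm A ⊞ eq_hom (unitrO T B)) ∘ (idm A ⊞ (idm B ⊠ bang N))
  ∘ (idm A ⊞ eq_hom (eq_sym (zerorO BP B))) ∘ eq_hom (eq_sym (unitrO P A)).

Definition inr_map (A B : C) : hom B (A ⊕ B) :=
  (eq_hom (unitrO T A) ⊞ idm B) ∘ ((idm A ⊠ bang N) ⊞ idm B)
  ∘ (eq_hom (eq_sym (zerorO BP A)) ⊞ idm B) ∘ eq_hom (eq_sym (unitlO P B)).

(** A ⊕ B --(f ⊕ g)--> D ⊕ D = (I ⊗ D) ⊕ (I ⊗ D) --δ#--> (I ⊕ I) ⊗ D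
    --(!_{I⊕I} ⊗ D)--> I ⊗ D = D *)
Definition copair (A B D : C) (f : hom A D) (g : hom B D) : hom (A ⊕ B) D :=
  eq_hom (unitlO T D) ∘ (bang (I ⊕ I) ⊠ idm D) ∘ dr BP I I D
  ∘ (eq_hom (eq_sym (unitlO T D)) ⊞ eq_hom (eq_sym (unitlO T D)))
  ∘ (f ⊞ g).
End Maps.

(* Main.v *)
Require Import Defs.
From Stdlib Require Import ProofIrrelevance.

Lemma eqh_pi (C : category) (A B : C) (e e' : A = B) : eq_hom e = eq_hom e'.
Proof. now rewrite (proof_irrelevance _ e e'). Qed.
Lemma eqh_refl (C : category) (A : C) : idm A = eq_hom (eq_refl A).
Proof. reflexivity. Qed.
Lemma eqh_comp (C : category) (A B D : C) (e1 : A = B) (e2 : B = D) :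
  eq_hom e2 ∘ eq_hom e1 = eq_hom (eq_trans e1 e2).
Proof. destruct e2, e1. simpl. apply comp_idl. Qed.
Lemma eqh_comp' (C : category) (A B D E : C) (e1 : A = B) (e2 : B = D) (X : hom D E) :
  X ∘ eq_hom e2 ∘ eq_hom e1 = X ∘ eq_hom (eq_trans e1 e2).
Proof. now rewrite <- comp_assoc, eqh_comp. Qed.
Lemma eqh_tens (C : category) (s : ssm C) (A A' B B' : C) (e1 : A = A') (e2 : B = B') :
  tensm s (eq_hom e1) (eq_hom e2) = eq_hom (f_equal2 (tens s) e1 e2).
Proof. destruct e1, e2. transitivity (eq_hom (eq_refl (tens s A B))); [exact (tens_id s A B) | apply eqh_pi]. Qed.

Lemma eqh_id (C : category) (A : C) (e : A = A) : eq_hom e = idm A.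
Proof. rewrite eqh_refl. apply eqh_pi. Qed.
Ltac eqnorm :=
  repeat rewrite comp_assoc;
  repeat rewrite eqh_refl;
  repeat (rewrite eqh_tens || rewrite eqh_comp || rewrite eqh_comp');
  repeat rewrite <- eqh_refl;
  repeat rewrite eqh_id;
  repeat rewrite comp_idr; repeat rewrite comp_idl;
  first [reflexivity | apply eqh_pi | (f_equal; apply eqh_pi)].


Lemma eqh_solve_l (C : category) (A B D : C) (e : A = B) (x : hom D A) (y : hom D B) :
  eq_hom e ∘ x = y -> x = eq_hom (eq_sym e) ∘ y.
Proof. destruct e. simpl. intros H. rewrite comp_idl in H. now rewrite comp_idl. Qed.
Lemma eqh_solve_r (C : category) (A B D : C) (e : A = B) (x : hom B D) (y : hom A D) :
  x ∘ eq_hom e = y -> x = y ∘ eq_hom (eq_sym e).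
Proof. destruct e. simpl. intros H. rewrite comp_idr in H. now rewrite comp_idr. Qed.
Lemma comp_rw {C : category} {A B D : C} {a : hom B D} {b : hom A B} {c : hom A D} :
  a ∘ b = c -> forall E (X : hom D E), X ∘ a ∘ b = X ∘ c.
Proof. intros H E X. now rewrite <- comp_assoc, H. Qed.
Lemma init_unique (C : category) (BP : bipermutative C)
  (bang : forall X : C, hom X (munit (times BP))) (A : C) (h : hom (munit (plus BP)) A) :
  h = init_map bang A.
Proof.
  unfold init_map.
  pose proof (unitrM (times BP) h) as U. symmetry in U. apply eqh_solve_r in U.
  pose proof (zerorM BP h) as ZR. apply eqh_solve_l in ZR.
  pose proof (zerolM BP (bang (munit (plus BP)))) as ZL. apply eqh_solve_l in ZL.
  assert (F1 : tensm (times BP) h (idm (munit (times BP))) ∘ tensm (times BP) (idm (munit (plus BP))) (bang (munit (plus BP)))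
             = tensm (times BP) (idm A) (bang (munit (plus BP))) ∘ tensm (times BP) h (idm (munit (plus BP)))).
  { rewrite <- !tens_comp. now rewrite !comp_idl, !comp_idr. }
  rewrite U. rewrite <- !comp_assoc. f_equal.
  assert (E : eq_hom (eq_sym (unitrO (times BP) (munit (plus BP)))) = tensm (times BP) (idm (munit (plus BP))) (bang (munit (plus BP))) ∘ eq_hom (eq_sym (zerolO BP (munit (plus BP))))).
  { rewrite ZL. eqnorm. }
  rewrite E, comp_assoc, F1, ZR. eqnorm.
Qed.
Set Implicit Arguments. Unset Strict Implicit.
Notation PS BP A B := (tens (plus BP) A B).
Notation TS BP A B := (tens (times BP) A B).
Notation PM BP f g := (tensm (plus BP) f g).
Notation TM BP f g := (tensm (times BP) f g).
Notation NN BP := (munit (plus BP)).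
Notation II BP := (munit (times BP)).

Lemma tens_comp_r (C : category) (s : ssm C) (A B B' B'' : C) (f : hom B B') (g : hom B' B'') :
  tensm s (idm A) (g ∘ f) = tensm s (idm A) g ∘ tensm s (idm A) f.
Proof. rewrite <- tens_comp. now rewrite comp_idl. Qed.
Lemma tens_comp_l (C : category) (s : ssm C) (A B B' B'' : C) (f : hom B B') (g : hom B' B'') :
  tensm s (g ∘ f) (idm A) = tensm s g (idm A) ∘ tensm s f (idm A).
Proof. rewrite <- tens_comp. now rewrite comp_idl. Qed.
Lemma tens_split1 (C : category) (s : ssm C) (A A' B B' : C) (f : hom A A') (g : hom B B') :
  tensm s f g = tensm s f (idm B') ∘ tensm s (idm A) g.
Proof. rewrite <- tens_comp. now rewrite comp_idl, comp_idr. Qed.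
Lemma tens_split2 (C : category) (s : ssm C) (A A' B B' : C) (f : hom A A') (g : hom B B') :
  tensm s f g = tensm s (idm A') g ∘ tensm s f (idm B).
Proof. rewrite <- tens_comp. now rewrite comp_idl, comp_idr. Qed.

Definition fold' (C : category) (BP : bipermutative C)
  (bang : forall X : C, hom X (II BP)) (X : C) : hom (PS BP (TS BP (II BP) X) (TS BP (II BP) X)) X :=
  eq_hom (unitlO (times BP) X) ∘ TM BP (bang (PS BP (II BP) (II BP))) (idm X) ∘ dr BP (II BP) (II BP) X.
Arguments fold' {C BP} bang X.

Lemma dr_nat_idl (C : category) (BP : bipermutative C) (A B B' D : C) (g : hom B B') :
  dr BP A B' D ∘ PM BP (idm (TS BP A D)) (TM BP g (idm D)) = TM BP (PM BP (idm A) g) (idm D) ∘ dr BP A B D.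
Proof. rewrite <- (dr_nat BP (idm A) g (idm D)). now rewrite tens_id. Qed.
Lemma dr_nat_idr (C : category) (BP : bipermutative C) (A A' B D : C) (g : hom A A') :
  dr BP A' B D ∘ PM BP (TM BP g (idm D)) (idm (TS BP B D)) = TM BP (PM BP g (idm B)) (idm D) ∘ dr BP A B D.
Proof. rewrite <- (dr_nat BP g (idm B) (idm D)). now rewrite tens_id. Qed.

Lemma fold_inl (C : category) (BP : bipermutative C)
  (bang : forall X : C, hom X (II BP))
  (bang_unique : forall (X : C) (f : hom X (II BP)), f = bang X) (X : C) :
  fold' bang X ∘ PM BP (idm (TS BP (II BP) X)) (init_map bang (TS BP (II BP) X))
  = eq_hom (unitlO (times BP) X) ∘ eq_hom (unitrO (plus BP) (TS BP (II BP) X)).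
Proof.
  unfold fold'.
  rewrite <- (init_unique C BP bang (TS BP (II BP) X)
      (TM BP (init_map bang (II BP)) (idm X) ∘ eq_hom (eq_sym (zerolO BP X)))).
  rewrite tens_comp_r.
  rewrite comp_assoc.
  rewrite (comp_rw (@dr_nat_idl _ BP _ _ _ _ (init_map bang (II BP)))).
  rewrite !comp_assoc.
  rewrite (comp_rw (eq_sym (tens_comp_l _ _ _ _))).
  rewrite (bang_unique _ (bang _ ∘ _)).
  rewrite <- (bang_unique _ (eq_hom (unitrO (plus BP) (II BP)))).
  pose proof (lap_XVII BP (II BP) X) as L.
  apply (f_equal (fun z => z ∘ dr BP (II BP) (NN BP) X)) in L.
  rewrite <- comp_assoc, dr_iso1, comp_idr in L.
  rewrite (comp_rw (eq_sym L)).
  eqnorm.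
Qed.

Lemma fold_inr (C : category) (BP : bipermutative C)
  (bang : forall X : C, hom X (II BP))
  (bang_unique : forall (X : C) (f : hom X (II BP)), f = bang X) (X : C) :
  fold' bang X ∘ PM BP (init_map bang (TS BP (II BP) X)) (idm (TS BP (II BP) X))
  = eq_hom (unitlO (times BP) X) ∘ eq_hom (unitlO (plus BP) (TS BP (II BP) X)).
Proof.
  unfold fold'.
  rewrite <- (init_unique C BP bang (TS BP (II BP) X)
      (TM BP (init_map bang (II BP)) (idm X) ∘ eq_hom (eq_sym (zerolO BP X)))).
  rewrite tens_comp_l.
  rewrite comp_assoc.
  rewrite (comp_rw (@dr_nat_idr _ BP _ _ _ _ (init_map bang (II BP)))).
  rewrite !comp_assoc.
  rewrite (comp_rw (eq_sym (tens_comp_l _ _ _ _))).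
  rewrite (bang_unique _ (bang _ ∘ _)).
  rewrite <- (bang_unique _ (eq_hom (unitlO (plus BP) (II BP)))).
  pose proof (lap_XVI BP (II BP) X) as L.
  apply (f_equal (fun z => z ∘ dr BP (NN BP) (II BP) X)) in L.
  rewrite <- comp_assoc, dr_iso1, comp_idr in L.
  rewrite (comp_rw (eq_sym L)).
  eqnorm.
Qed.

Lemma init_comp (C : category) (BP : bipermutative C) (bang : forall X : C, hom X (II BP))
  (X Y : C) (g : hom X Y) : g ∘ init_map bang X = init_map bang Y.
Proof. apply init_unique. Qed.

Lemma inl_eq (C : category) (BP : bipermutative C) (bang : forall X : C, hom X (II BP)) (A B : C) :
  inl_map bang A B = PM BP (idm A) (init_map bang B) ∘ eq_hom (eq_sym (unitrO (plus BP) A)).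
Proof. unfold inl_map, init_map. rewrite !tens_comp_r, ?comp_assoc. reflexivity. Qed.
Lemma inr_eq (C : category) (BP : bipermutative C) (bang : forall X : C, hom X (II BP)) (A B : C) :
  inr_map bang A B = PM BP (init_map bang A) (idm B) ∘ eq_hom (eq_sym (unitlO (plus BP) B)).
Proof. unfold inr_map, init_map. rewrite !tens_comp_l, ?comp_assoc. reflexivity. Qed.

Lemma unitr_move (C : category) (s : ssm C) (A A' : C) (h : hom A A') :
  tensm s h (idm (munit s)) ∘ eq_hom (eq_sym (unitrO s A)) = eq_hom (eq_sym (unitrO s A')) ∘ h.
Proof.
  pose proof (unitrM s h) as U. apply eqh_solve_l in U. rewrite U.
  rewrite !comp_assoc, eqh_comp', eqh_id, comp_idr. reflexivity.
Qed.
Lemma unitl_move (C : category) (s : ssm C) (A A' : C) (h : hom A A') :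
  tensm s (idm (munit s)) h ∘ eq_hom (eq_sym (unitlO s A)) = eq_hom (eq_sym (unitlO s A')) ∘ h.
Proof.
  pose proof (unitlM s h) as U. apply eqh_solve_l in U. rewrite U.
  rewrite !comp_assoc, eqh_comp', eqh_id, comp_idr. reflexivity.
Qed.

Lemma copair_inl (C : category) (BP : bipermutative C)
  (bang : forall X : C, hom X (II BP))
  (bang_unique : forall (X : C) (f : hom X (II BP)), f = bang X) (A B D : C) (f : hom A D) (g : hom B D) :
  copair bang f g ∘ inl_map bang A B = f.
Proof.
  rewrite inl_eq. unfold copair. rewrite !comp_assoc.
  rewrite (comp_rw (eq_sym (tens_comp (plus BP) (idm A) f (init_map bang B) g))).
  rewrite comp_idr, init_comp.
  rewrite (comp_rw (eq_sym (tens_comp (plus BP) f _ (init_map bang D) _))).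
  rewrite init_comp.
  rewrite (tens_split2 (plus BP) (eq_hom _ ∘ f) (init_map bang _)).
  rewrite !comp_assoc, (comp_rw (unitr_move _ _)).
  rewrite !comp_assoc.
  pose proof (fold_inl bang_unique D) as H. unfold fold' in H. rewrite H.
  eqnorm.
Qed.

Lemma copair_inr (C : category) (BP : bipermutative C)
  (bang : forall X : C, hom X (II BP))
  (bang_unique : forall (X : C) (f : hom X (II BP)), f = bang X) (A B D : C) (f : hom A D) (g : hom B D) :
  copair bang f g ∘ inr_map bang A B = g.
Proof.
  rewrite inr_eq. unfold copair. rewrite !comp_assoc.
  rewrite (comp_rw (eq_sym (tens_comp (plus BP) (init_map bang A) f (idm B) g))).
  rewrite comp_idr, init_comp.
  rewrite (comp_rw (eq_sym (tens_comp (plus BP) (init_map bang D) _ g _))).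
  rewrite init_comp.
  rewrite (tens_split1 (plus BP) (init_map bang _) (eq_hom _ ∘ g)).
  rewrite !comp_assoc, (comp_rw (unitl_move _ _)).
  rewrite !comp_assoc.
  pose proof (fold_inr bang_unique D) as H. unfold fold' in H. rewrite H.
  eqnorm.
Qed.

Lemma pm_slide (C : category) (s : ssm C) (X X' Y0 Y1 Y2 Y3 : C) (f : hom X X')
  (a : hom Y1 Y2) (b : hom Y0 Y1) (c : hom Y3 Y2) (a' : hom Y0 Y3) :
  a ∘ b = c ∘ a' -> tensm s (idm X') a ∘ tensm s f b = tensm s f c ∘ tensm s (idm X) a'.
Proof. intros H. rewrite <- !tens_comp, comp_idl, comp_idr, H. reflexivity. Qed.
Lemma pm_slide_l (C : category) (s : ssm C) (X X' Y0 Y1 Y2 Y3 : C) (f : hom X X')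
  (a : hom Y1 Y2) (b : hom Y0 Y1) (c : hom Y3 Y2) (a' : hom Y0 Y3) :
  a ∘ b = c ∘ a' -> tensm s a (idm X') ∘ tensm s b f = tensm s c f ∘ tensm s a' (idm X).
Proof. intros H. rewrite <- !tens_comp, comp_idl, comp_idr, H. reflexivity. Qed.

Lemma assoc_inv_move (C : category) (s : ssm C) (A A' B B' D D' : C)
  (f : hom A A') (g : hom B B') (h : hom D D') :
  eq_hom (eq_sym (assocO s A' B' D')) ∘ tensm s (tensm s f g) h
  = tensm s f (tensm s g h) ∘ eq_hom (eq_sym (assocO s A B D)).
Proof.
  pose proof (assocM s f g h) as H. apply eqh_solve_l in H. rewrite H.
  rewrite !comp_assoc, eqh_comp', eqh_id, comp_idr. reflexivity.
Qed.

Lemma midswap_nat (C : category) (s : ssm C) (X X' Y Y' Z Z' W W' : C)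
  (f1 : hom X X') (f2 : hom Y Y') (f3 : hom Z Z') (f4 : hom W W') :
  mid_swap s X' Y' Z' W' ∘ tensm s (tensm s f1 f2) (tensm s f3 f4)
  = tensm s (tensm s f1 f3) (tensm s f2 f4) ∘ mid_swap s X Y Z W.
Proof.
  unfold mid_swap. rewrite !comp_assoc.
  rewrite (comp_rw (assoc_inv_move s f1 f2 (tensm s f3 f4))).
  rewrite !comp_assoc.
  rewrite (comp_rw (pm_slide s f1 (assocM s f2 f3 f4))).
  rewrite !comp_assoc.
  rewrite (comp_rw (pm_slide s f1 (pm_slide_l s f4 (sym_nat s f2 f3)))).
  rewrite !comp_assoc.
  rewrite (comp_rw (pm_slide s f1 (assoc_inv_move s f3 f2 f4))).
  rewrite !comp_assoc.
  rewrite (assocM s f1 f3 (tensm s f2 f4)).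
  rewrite ?comp_assoc. reflexivity.
Qed.

Lemma sym_NN (C : category) (s : ssm C) : sym s (munit s) (munit s) = idm _.
Proof.
  pose proof (sym_unit s (munit s)) as H. apply eqh_solve_l in H. rewrite H. eqnorm.
Qed.

Lemma midswap_NN (C : category) (s : ssm C) (A B : C) :
  mid_swap s A (munit s) (munit s) B = idm _.
Proof. unfold mid_swap. rewrite sym_NN. eqnorm. Qed.

Lemma tm_dist (C : category) (BP : bipermutative C) (A0 A1 B D : C) (f : hom A0 A1) :
  TM BP f (idm (PS BP B D))
  = eq_hom (eq_sym (distlO BP A1 B D)) ∘ PM BP (TM BP f (idm B)) (TM BP f (idm D)) ∘ eq_hom (distlO BP A0 B D).
Proof.
  rewrite <- (tens_id (plus BP) B D).
  pose proof (distlM BP f (idm B) (idm D)) as H. apply eqh_solve_l in H. rewrite H.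
  rewrite !comp_assoc. reflexivity.
Qed.

Lemma VIII' (C : category) (BP : bipermutative C) (A B D E : C) :
  eq_hom (distlO BP (PS BP A B) D E) ∘ dr BP A B (PS BP D E)
  = PM BP (dr BP A B D) (dr BP A B E)
    ∘ mid_swap (plus BP) (TS BP A D) (TS BP A E) (TS BP B D) (TS BP B E)
    ∘ PM BP (eq_hom (distlO BP A D E)) (eq_hom (distlO BP B D E)).
Proof.
  pose proof (lap_VIII BP A B D E) as L.
  apply (f_equal (fun z => PM BP (dr BP A B D) (dr BP A B E) ∘ z ∘ dr BP A B (PS BP D E))) in L.
  assert (K : PM BP (dr BP A B D) (dr BP A B E) ∘ PM BP (dr_inv BP A B D) (dr_inv BP A B E) = idm _).
  { rewrite <- tens_comp, !dr_iso2. apply tens_id. }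
  simpl in L. rewrite !comp_assoc in L. rewrite K, comp_idl in L. rewrite L.
  rewrite <- (comp_assoc _ (dr_inv BP A B (PS BP D E)) (dr BP A B (PS BP D E))).
  rewrite dr_iso1, comp_idr. reflexivity.
Qed.

Lemma inl_nat (C : category) (BP : bipermutative C) (bang : forall X : C, hom X (II BP))
  (A A' B B' : C) (u : hom A A') (v : hom B B') :
  PM BP u v ∘ inl_map bang A B = inl_map bang A' B' ∘ u.
Proof.
  rewrite !inl_eq. rewrite comp_assoc.
  rewrite <- tens_comp, comp_idr, init_comp.
  rewrite (tens_split2 (plus BP) u (init_map bang B')).
  rewrite <- !comp_assoc. f_equal. apply unitr_move.
Qed.
Lemma inr_nat (C : category) (BP : bipermutative C) (bang : forall X : C, hom X (II BP))
  (A A' B B' : C) (u : hom A A') (v : hom B B') :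
  PM BP u v ∘ inr_map bang A B = inr_map bang A' B' ∘ v.
Proof.
  rewrite !inr_eq. rewrite comp_assoc.
  rewrite <- tens_comp, comp_idr, init_comp.
  rewrite (tens_split1 (plus BP) (init_map bang A') v).
  rewrite <- !comp_assoc. f_equal. apply unitl_move.
Qed.

Lemma copair_id (C : category) (BP : bipermutative C)
  (bang : forall X : C, hom X (II BP))
  (bang_unique : forall (X : C) (f : hom X (II BP)), f = bang X) (A B : C) :
  copair bang (inl_map bang A B) (inr_map bang A B) = idm (PS BP A B).
Proof.
  unfold copair. rewrite tm_dist. rewrite !comp_assoc.
  rewrite (comp_rw (VIII' BP (II BP) (II BP) A B)). rewrite !comp_assoc.
  assert (E1 : eq_hom (unitlO (times BP) (PS BP A B)) ∘ eq_hom (eq_sym (distlO BP (II BP) A B))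
               = PM BP (eq_hom (unitlO (times BP) A)) (eq_hom (unitlO (times BP) B))).
  { symmetry. eqnorm. }
  rewrite E1.
  rewrite <- tens_comp. rewrite <- tens_comp.
  assert (E2 : PM BP (eq_hom (distlO BP (II BP) A B)) (eq_hom (distlO BP (II BP) A B))
     ∘ PM BP (eq_hom (eq_sym (unitlO (times BP) (PS BP A B)))) (eq_hom (eq_sym (unitlO (times BP) (PS BP A B))))
     = PM BP (PM BP (eq_hom (eq_sym (unitlO (times BP) A))) (eq_hom (eq_sym (unitlO (times BP) B))))
             (PM BP (eq_hom (eq_sym (unitlO (times BP) A))) (eq_hom (eq_sym (unitlO (times BP) B))))).
  { eqnorm. }
  rewrite (comp_rw E2).
  rewrite (comp_rw (eq_sym (tens_comp _ _ _ _ _))).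
  rewrite inl_nat, inr_nat.
  rewrite (tens_comp (plus BP) (eq_hom (eq_sym (unitlO (times BP) A)))).
  rewrite inl_eq, inr_eq.
  rewrite (tens_comp (plus BP) (eq_hom (eq_sym (unitrO (plus BP) (TS BP (II BP) A))))).
  rewrite !comp_assoc.
  rewrite (comp_rw (midswap_nat _ _ _ _ _)).
  rewrite midswap_NN, comp_idr.
  rewrite <- tens_comp.
  pose proof (fold_inl bang_unique A) as H1. unfold fold' in H1. rewrite H1.
  pose proof (fold_inr bang_unique B) as H2. unfold fold' in H2. rewrite H2.
  eqnorm.
Qed.

Lemma copair_nat (C : category) (BP : bipermutative C)
  (bang : forall X : C, hom X (II BP)) (A B X D : C) (f : hom A X) (g : hom B X) (h : hom X D) :
  copair bang (h ∘ f) (h ∘ g) = h ∘ copair bang f g.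
Proof.
  unfold copair.
  rewrite (tens_comp (plus BP) f h g h). rewrite !comp_assoc.
  rewrite (comp_rw (eq_sym (tens_comp (plus BP) h _ h _))).
  rewrite <- !(unitl_move (times BP) h).
  rewrite (tens_comp (plus BP) _ (TM BP (idm (II BP)) h) _ (TM BP (idm (II BP)) h)).
  rewrite !comp_assoc.
  rewrite (comp_rw (dr_nat BP (idm (II BP)) (idm (II BP)) h)).
  rewrite tens_id, !comp_assoc.
  rewrite (comp_rw (eq_sym (tens_comp (times BP) (idm _) _ h (idm _)))).
  rewrite comp_idr, comp_idl.
  rewrite (tens_split2 (times BP) (bang _) h).
  rewrite !comp_assoc.
  rewrite (unitlM (times BP) h).
  rewrite ?comp_assoc. reflexivity.
Qed.

Theorem mainTheorem1 (C : category) (BP : bipermutative C)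
  (bang : forall X : C, hom X (munit (times BP)))
  (bang_unique : forall (X : C) (f : hom X (munit (times BP))), f = bang X) :
  (* N is initial, with unique map init_map *)
  (forall (A : C) (h : hom (munit (plus BP)) A), h = init_map bang A) /\
  (* (⊕, N) is a coproduct with injections inl_map, inr_map and copairing copair *)
  (forall (A B D : C) (f : hom A D) (g : hom B D),
      copair bang f g ∘ inl_map bang A B = f /\
      copair bang f g ∘ inr_map bang A B = g /\
      (forall h : hom (tens (plus BP) A B) D,
          h ∘ inl_map bang A B = f -> h ∘ inr_map bang A B = g ->
          h = copair bang f g)).
Proof.
  split.
  - intros A h. apply init_unique.
  - intros A B D f g. split; [|split].
    + apply copair_inl; assumption.
    + apply copair_inr; assumption.
    + intros h Hf Hg. subst f g. rewrite copair_nat, copair_id by assumption.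
      symmetry. apply comp_idr.
Qed.
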